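(* Let $C$ be a linear $[n,k,d]_q$ code with covering radius $\rho$, and let $C'=\{(a,x_1,\dots,x_n): a\in\mathbb{F}_q,\ (x_1,\dots,x_n)\in C\}\subseteq\mathbb{F}_q^{n+1}$ be its $q$-repeated code. Then $C'$ has covering radius $\rho'=\rho$ and minimum distance $d'=1$. Moreover, $C'$ is completely regular if and only if $C$ is completely regular.
   Context: $\mathbb{F}_q$ is the finite field with $q$ elements. Hamming weight $\mathrm{wt}$ and distance $d({\bf x},{\bf y})=\mathrm{wt}({\bf x}-{\bf y})$; $d({\bf v},C)=\min_{{\bf x}\in C}d({\bf v},{\bf x})$; covering radius $\rho=\max_{{\bf v}}d({\bf v},C)$. A code $C$ is completely regular if for every vector ${\bf x}$, with $t=d({\bf x},C)$, the number of codewords at distance $i$ from ${\bf x}$ depends only on $t$ and $i$. *)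

(* Defs.v *)
From HB Require Import structures.
From mathcomp Require Import all_boot all_order all_algebra all_field.
Set Implicit Arguments. Unset Strict Implicit. Unset Printing Implicit Defensive.
Import GRing.Theory.
Local Open Scope ring_scope.

Section Codes.
Variable F : finFieldType.

Definition wt n (x : 'rV[F]_n) : nat := #|[set i : 'I_n | x 0 i != 0]|.
Definition hdist n (x y : 'rV[F]_n) : nat := wt (x - y).

Definition linear_code n (C : {set 'rV[F]_n}) : Prop :=
  0 \in C /\ forall (a : F) (x y : 'rV[F]_n), x \in C -> y \in C -> a *: x + y \in C.

(* d(v, C) = min_{x in C} d(v, x); distances are <= n so n is a neutral default
   for nonempty C. *)
Definition dist_to_code n (C : {set 'rV[F]_n}) (v : 'rV[F]_n) : nat :=
  \big[minn/n]_(x in C) hdist v x.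

Definition covering_radius n (C : {set 'rV[F]_n}) : nat :=
  \max_(v : 'rV[F]_n) dist_to_code C v.

(* minimum distance = min over distinct pairs of codewords
   (default n.+1 only matters for codes with < 2 codewords). *)
Definition min_distance n (C : {set 'rV[F]_n}) : nat :=
  \big[minn/n.+1]_(x in C) \big[minn/n.+1]_(y in C | y != x) hdist x y.

Definition completely_regular n (C : {set 'rV[F]_n}) : Prop :=
  forall x y : 'rV[F]_n, dist_to_code C x = dist_to_code C y ->
    forall i : nat, #|[set c in C | hdist x c == i]| = #|[set c in C | hdist y c == i]|.

Definition repeated_code n (C : {set 'rV[F]_n}) : {set 'rV[F]_n.+1} :=
  [set x : 'rV[F]_n.+1 | \row_(j < n) x 0 (lift ord0 j) \in C].

End Codes.

(* Main.v *)
Require Import Defs.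
From HB Require Import structures.
From mathcomp Require Import all_boot all_order all_algebra all_field.
Set Implicit Arguments. Unset Strict Implicit. Unset Printing Implicit Defensive.
Import GRing.Theory.

Lemma big_minn_le (T : eqType) (r : seq T) (P : pred T) (f : T -> nat) m x :
  x \in r -> P x -> \big[minn/m]_(y <- r | P y) f y <= f x.
Proof.
elim: r => [|a r IH] //=; rewrite in_cons big_cons => /orP [/eqP <- | xr] Px.
  by rewrite Px geq_minl.
case: (P a); last exact: IH.
by rewrite geq_min IH ?orbT.
Qed.

Lemma big_minn_att (T : eqType) (r : seq T) (P : pred T) (f : T -> nat) m :
  (forall y, y \in r -> P y -> f y <= m) -> has P r ->
  exists2 y, (y \in r) && P y & \big[minn/m]_(y <- r | P y) f y = f y.
Proof.
elim: r => [|a r IH] //= Hb; rewrite big_cons.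
have Hb' : forall y, y \in r -> P y -> f y <= m.
  by move=> y yr; apply: Hb; rewrite in_cons yr orbT.
case Pa: (P a) => /= Hh.
  case Hr: (has P r).
    have [y /andP [yr Py] ->] := IH Hb' Hr.
    case: (leqP (f a) (f y)) => H.
      by exists a; rewrite ?mem_head ?Pa //; apply/minn_idPl.
    exists y; first by rewrite in_cons yr orbT Py.
    by move/ltnW/minn_idPr: H.
  rewrite big_hasC ?Hr //; exists a; rewrite ?mem_head ?Pa //.
  by apply/minn_idPl; apply: Hb; rewrite ?mem_head.
have [y /andP [yr Py] ->] := IH Hb' Hh.
by exists y; rewrite ?in_cons ?yr ?orbT.
Qed.

Section S.
Variable F : finFieldType.
Local Open Scope ring_scope.

Definition tl n (x : 'rV[F]_n.+1) : 'rV[F]_n := \row_(j < n) x 0 (lift ord0 j).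
Definition cns n (a : F) (u : 'rV[F]_n) : 'rV[F]_n.+1 :=
  \row_j (match unlift ord0 j with Some k => u 0 k | None => a end).

Lemma tl_cns n a (u : 'rV[F]_n) : tl (cns a u) = u.
Proof. by apply/rowP => j; rewrite !mxE liftK. Qed.

Lemma cns0 n a (u : 'rV[F]_n) : cns a u 0 ord0 = a.
Proof. by rewrite mxE unlift_none. Qed.

Lemma cns_tl n (x : 'rV[F]_n.+1) : cns (x 0 ord0) (tl x) = x.
Proof.
apply/rowP => j; rewrite !mxE; case: unliftP => [k -> | ->]; by rewrite ?mxE.
Qed.

Lemma card_sum (T : finType) (P : pred T) : #|[set c | P c]| = (\sum_c (P c : nat))%N.
Proof.
rewrite -sum1_card big_mkcond /=; apply: eq_bigr => c _; rewrite inE; by case: (P c).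
Qed.

Lemma wt_sum n (x : 'rV[F]_n) : wt x = (\sum_i ((x 0%R i != 0%R) : nat))%N.
Proof. by rewrite /wt card_sum. Qed.

Lemma wt_tl n (x : 'rV[F]_n.+1) : wt x = ((x 0%R ord0 != 0%R) + wt (tl x))%N.
Proof. by rewrite !wt_sum big_ord_recl; congr (_ + _)%N; apply: eq_bigr => i _; rewrite mxE. Qed.

Lemma hdist_tl n (x c : 'rV[F]_n.+1) :
  hdist x c = ((x 0%R ord0 != c 0%R ord0) + hdist (tl x) (tl c))%N.
Proof.
rewrite /hdist wt_tl !mxE subr_eq0; congr (_ + wt _)%N.
by apply/rowP => j; rewrite !mxE.
Qed.

Lemma wt_le n (x : 'rV[F]_n) : (wt x <= n)%N.
Proof. by rewrite /wt; apply: leq_trans (max_card _) _; rewrite card_ord. Qed.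

Lemma wt0 n : wt (0%R : 'rV[F]_n) = 0%N.
Proof. by rewrite wt_sum big1 // => i _; rewrite mxE eqxx. Qed.

Lemma wt_pos n (x : 'rV[F]_n) : x != 0 -> (0 < wt x)%N.
Proof.
move=> xn; rewrite lt0n; apply: contra xn => /eqP; rewrite /wt => /eqP.
rewrite cards_eq0 => /eqP H; apply/eqP/rowP => j; rewrite mxE.
apply/eqP; apply/negPn/negP => Hj.
by have := in_set0 j; rewrite -H inE Hj.
Qed.

Lemma in_rep n (C : {set 'rV[F]_n}) x : (x \in repeated_code C) = (tl x \in C).
Proof. by rewrite inE. Qed.

Lemma dist_rep n (C : {set 'rV[F]_n}) x : 0 \in C ->
  dist_to_code (repeated_code C) x = dist_to_code C (tl x).
Proof.
move=> C0; rewrite /dist_to_code.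
have [y /andP [_ yC] Ey] : exists2 y, (y \in index_enum _) && (y \in C) &
   \big[minn/n]_(y in C) hdist (tl x) y = hdist (tl x) y.
  apply: big_minn_att; first by move=> z _ _; apply: wt_le.
  by apply/hasP; exists 0; rewrite ?mem_index_enum.
have [c /andP [_ cC] Ec] : exists2 c, (c \in index_enum _) && (c \in repeated_code C) &
   \big[minn/n.+1]_(c in repeated_code C) hdist x c = hdist x c.
  apply: big_minn_att; first by move=> z _ _; apply: wt_le.
  by apply/hasP; exists (cns 0 0); rewrite ?mem_index_enum // in_rep tl_cns.
apply/eqP; rewrite eqn_leq; apply/andP; split.
  apply: leq_trans (big_minn_le _ _ (mem_index_enum (cns (x 0%R ord0) y)) _) _.
    by rewrite in_rep tl_cns.
  by rewrite Ey hdist_tl cns0 tl_cns eqxx.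
rewrite Ec; apply: leq_trans (big_minn_le _ _ (mem_index_enum (tl c)) _) _.
  by rewrite -in_rep.
by rewrite hdist_tl leq_addl.
Qed.

Definition Ncnt n (C : {set 'rV[F]_n}) (u : 'rV[F]_n) (i : nat) : nat :=
  (\sum_y ((y \in C) && (hdist u y == i) : nat))%N.

Lemma count_C n (C : {set 'rV[F]_n}) u i :
  #|[set c in C | hdist u c == i]| = Ncnt C u i.
Proof. by rewrite card_sum. Qed.

Lemma count_rep n (C : {set 'rV[F]_n}) x i :
  #|[set c in repeated_code C | hdist x c == i]| =
  (Ncnt C (tl x) i + #|F|.-1 * (if i is i'.+1 then Ncnt C (tl x) i' else 0))%N.
Proof.
rewrite card_sum.
rewrite (reindex (fun p : F * 'rV[F]_n => cns p.1 p.2)) /=; last first.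
  exists (fun c : 'rV[F]_n.+1 => (c 0%R ord0, tl c)) => [[a u] _ | c _] /=.
    by rewrite cns0 tl_cns.
  by rewrite cns_tl.
rewrite -(pair_big xpredT xpredT (fun a u => ((cns a u \in repeated_code C) && (hdist x (cns a u) == i) : nat))) /=.
rewrite exchange_big /=.
under eq_bigr => u _.
  rewrite (bigD1 (x 0%R ord0)) //=.
  under eq_bigr => a Ha.
    have Ha' : (x 0%R ord0 != a) by rewrite eq_sym.
    rewrite in_rep tl_cns hdist_tl cns0 tl_cns Ha' add1n.
    over.
  rewrite sum_nat_const cardC1 in_rep tl_cns hdist_tl cns0 tl_cns eqxx add0n.
  over.
rewrite big_split /= -big_distrr /=; congr (_ + _)%N.
case: i => [|i] /=.
  by rewrite big1 ?muln0 // => u _; rewrite andbF.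
by [].
Qed.

Lemma tl0 n : tl (0%R : 'rV[F]_n.+1) = 0.
Proof. by apply/rowP => j; rewrite !mxE. Qed.

End S.

Theorem theorem2p3 (F : finFieldType) (n : nat) (C : {set 'rV[F]_n}) :
  linear_code C ->
  [/\ covering_radius (repeated_code C) = covering_radius C,
      min_distance (repeated_code C) = 1%N
    & completely_regular (repeated_code C) <-> completely_regular C].
Proof.
move=> [C0 _]; split.
- rewrite /covering_radius; apply/eqP; rewrite eqn_leq; apply/andP; split.
    apply/bigmax_leqP => v _; rewrite dist_rep //; exact: leq_bigmax.
  apply/bigmax_leqP => u _; rewrite -(tl_cns (0%R : F) u) -dist_rep //; exact: leq_bigmax.
- rewrite /min_distance; apply/eqP; rewrite eqn_leq; apply/andP; split.
    apply: leq_trans (big_minn_le _ _ (mem_index_enum (0%R : 'rV[F]_n.+1)) _) _.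
      by rewrite in_rep tl0.
    apply: leq_trans (big_minn_le _ _ (mem_index_enum (cns (1%R : F) (0%R : 'rV[F]_n))) _) _.
      rewrite in_rep tl_cns C0 /=; apply/eqP => H.
      by have := cns0 (1%R : F) (0%R : 'rV[F]_n); rewrite H mxE => /eqP; rewrite eq_sym oner_eq0.
    by rewrite hdist_tl cns0 tl0 tl_cns mxE /hdist subr0 wt0 eq_sym oner_eq0.
  apply: (big_ind (fun v => 0 < v)%N) => //.
    by move=> a b Ha Hb; rewrite leq_min Ha Hb.
  move=> x _; apply: (big_ind (fun v => 0 < v)%N) => //.
    by move=> a b Ha Hb; rewrite leq_min Ha Hb.
  move=> y /andP [_ yx]; apply: wt_pos; rewrite subr_eq0 eq_sym; exact: yx.
- split.
    move=> H u v Huv i.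
    have Hc : forall j, #|[set c in repeated_code C | hdist (cns 0%R u) c == j]| =
                        #|[set c in repeated_code C | hdist (cns 0%R v) c == j]|.
      by apply: H; rewrite !dist_rep // !tl_cns.
    rewrite !count_C; elim: i => [|i IH].
      by have := Hc 0%N; rewrite !count_rep /= !tl_cns !muln0 !addn0.
    have := Hc i.+1; rewrite !count_rep /= !tl_cns IH => /eqP.
    by rewrite eqn_add2r => /eqP.
  move=> H x y Hxy i; rewrite !dist_rep // in Hxy.
  rewrite !count_rep; case: i => [|i] /=; rewrite -!count_C !(H _ _ Hxy) //.
Qed.
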